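(* For every $T\in\mathbb{T}$, $c(T)\le \beta(T)$.
   Context: Let $\mathbb{T}$ be the set of finite terms defined inductively by: the constant $e\in\mathbb{T}$; and if $X\in\mathbb{T}$ and $Xs$ is a finite (possibly empty) list of elements of $\mathbb{T}$, then $v(X,Xs)\in\mathbb{T}$ and $w(X,Xs)\in\mathbb{T}$. Write $[\,]$ for the empty list and $[X|Xs]$ for the list with first element $X$ followed by $Xs$. Define $n:\mathbb{T}\to\mathbb{N}$ by $n(e)=0$, $n(v(X,[\,]))=2^{n(X)+1}-1$, $n(v(X,[Y|Xs]))=(n(w(Y,Xs))+1)2^{n(X)+1}-1$, $n(w(X,[\,]))=2^{n(X)+2}-2$, $n(w(X,[Y|Xs]))=(n(v(Y,Xs))+2)2^{n(X)+1}-2$. Structural complexity $c:\mathbb{T}\to\mathbb{N}$: $c(e)=0$ and $c(v(X,Xs))=c(w(X,Xs))=\sum_{Y\in[X|Xs]}(1+c(Y))$ (sum over the elements of the list $[X|Xs]$). Bitsize $\beta:\mathbb{T}\to\mathbb{N}$: $\beta(e)=0$ and $\beta(v(X,Xs))=\beta(w(X,Xs))=\sum_{Y\in[X|Xs]}(n(Y)+1)$; this equals the number of applications of $o(x)=2x+1$ and $i(x)=2x+2$ in the unique representation of $n(T)$ as an iterated composition of $o$ and $i$ applied to $0$. *)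

(* Defs.v *)
From Stdlib Require Import Arith List.
Import ListNotations.

Inductive term : Type :=
| e : term
| v : term -> list term -> term
| w : term -> list term -> term.

(* n : T -> N.  nvw true a xs = n(v(X,xs)) and nvw false a xs = n(w(X,xs)),
   where a = n(X); the boolean records whether the head constructor is v. *)
Fixpoint n (t : term) : nat :=
  let nvw :=
    fix g (isv : bool) (a : nat) (l : list term) {struct l} : nat :=
      match l with
      | [] => if isv then 2 ^ (a + 1) - 1 else 2 ^ (a + 2) - 2
      | y :: ys =>
          if isv then (g false (n y) ys + 1) * 2 ^ (a + 1) - 1
          else (g true (n y) ys + 2) * 2 ^ (a + 1) - 2
      end in
  match t with
  | e => 0
  | v x xs => nvw true (n x) xs
  | w x xs => nvw false (n x) xs
  end.

Fixpoint c (t : term) : nat :=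
  match t with
  | e => 0
  | v x xs | w x xs =>
      (fix sumc (l : list term) : nat :=
         match l with
         | [] => 0
         | y :: ys => (1 + c y) + sumc ys
         end) (x :: xs)
  end.

Definition beta (t : term) : nat :=
  match t with
  | e => 0
  | v x xs | w x xs => list_sum (map (fun y => n y + 1) (x :: xs))
  end.

Lemma n_v_nil x : n (v x []) = 2 ^ (n x + 1) - 1.
Proof. reflexivity. Qed.
Lemma n_v_cons x y xs : n (v x (y :: xs)) = (n (w y xs) + 1) * 2 ^ (n x + 1) - 1.
Proof. reflexivity. Qed.
Lemma n_w_nil x : n (w x []) = 2 ^ (n x + 2) - 2.
Proof. reflexivity. Qed.
Lemma n_w_cons x y xs : n (w x (y :: xs)) = (n (v y xs) + 2) * 2 ^ (n x + 1) - 2.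
Proof. reflexivity. Qed.
Lemma c_v x xs : c (v x xs) = list_sum (map (fun y => 1 + c y) (x :: xs)).
Proof.
  cbn [c]. change (1 + c x + (fix sumc (l : list term) : nat :=
         match l with [] => 0 | y :: ys => (1 + c y) + sumc ys end) xs =
    1 + c x + list_sum (map (fun y => 1 + c y) xs)).
  f_equal. induction xs as [|y ys IH]; [reflexivity|]. simpl. simpl in IH. rewrite IH. reflexivity.
Qed.
Lemma c_w x xs : c (w x xs) = c (v x xs).
Proof. reflexivity. Qed.

(* Main.v *)
Require Import Defs.
From Stdlib Require Import Arith List Lia.
Import ListNotations.

Fixpoint g (isv : bool) (a : nat) (l : list term) {struct l} : nat :=
      match l with
      | [] => if isv then 2 ^ (a + 1) - 1 else 2 ^ (a + 2) - 2
      | y :: ys =>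
          if isv then (g false (n y) ys + 1) * 2 ^ (a + 1) - 1
          else (g true (n y) ys + 2) * 2 ^ (a + 1) - 2
      end.

Lemma n_v x xs : n (v x xs) = g true (n x) xs.
Proof. revert x; induction xs; reflexivity. Qed.
Lemma n_w x xs : n (w x xs) = g false (n x) xs.
Proof. revert x; induction xs; reflexivity. Qed.

Lemma pow_ge a : a + 2 <= 2 ^ (a + 1).
Proof. induction a; simpl in *; lia. Qed.

Lemma g_ge l : forall isv a, a + 1 + list_sum (map (fun y => n y + 1) l) <= g isv a l.
Proof.
  induction l as [|y ys IH]; intros isv a; simpl.
  - pose proof (pow_ge a). assert (2^(a+2) = 2 * 2^(a+1)) by (rewrite Nat.add_succ_r, <- Nat.add_1_r; simpl; rewrite (Nat.add_comm a 1) at 1; simpl; rewrite <- Nat.add_1_r at 1; rewrite Nat.pow_add_r; simpl; lia).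
    destruct isv; lia.
  - pose proof (pow_ge a). destruct isv.
    + specialize (IH false (n y)). set (G := g false (n y) ys) in *.
      set (S := list_sum _) in *. set (P := 2^(a+1)) in *.
      assert ((G+1)*(a+2) <= (G+1)*P) by (apply Nat.mul_le_mono_l; lia). nia.
    + specialize (IH true (n y)). set (G := g true (n y) ys) in *.
      set (S := list_sum _) in *. set (P := 2^(a+1)) in *.
      assert ((G+2)*(a+2) <= (G+2)*P) by (apply Nat.mul_le_mono_l; lia). nia.
Qed.

Lemma beta_le_n t : beta t <= n t.
Proof.
  destruct t as [|x xs|x xs]; simpl beta; [simpl; lia| rewrite n_v | rewrite n_w];
  simpl; [pose proof (g_ge xs true (n x)) | pose proof (g_ge xs false (n x))]; lia.
Qed.

Lemma sum_le (l : list term) (f h : term -> nat) :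
  (forall y, In y l -> f y <= h y) -> list_sum (map f l) <= list_sum (map h l).
Proof.
  induction l; simpl; intros H; [lia|]. pose proof (H a (or_introl eq_refl)).
  pose proof (IHl (fun y Hy => H y (or_intror Hy))). lia.
Qed.

Fixpoint tind (P : term -> Prop) (He : P e)
  (Hv : forall x xs, P x -> Forall P xs -> P (v x xs))
  (Hw : forall x xs, P x -> Forall P xs -> P (w x xs)) (t : term) : P t :=
  match t with
  | e => He
  | v x xs => Hv x xs (tind P He Hv Hw x)
      ((fix F l := match l return Forall P l with [] => Forall_nil _
        | y :: ys => Forall_cons _ (tind P He Hv Hw y) (F ys) end) xs)
  | w x xs => Hw x xs (tind P He Hv Hw x)
      ((fix F l := match l return Forall P l with [] => Forall_nil _
        | y :: ys => Forall_cons _ (tind P He Hv Hw y) (F ys) end) xs)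
  end.

Lemma key t : c t <= beta t.
Proof.
  induction t using tind.
  - simpl; lia.
  - rewrite c_v. unfold beta. apply sum_le. intros y [Hy|Hy].
    + subst y; pose proof (beta_le_n t); lia.
    + rewrite Forall_forall in H. pose proof (H y Hy). pose proof (beta_le_n y); lia.
  - rewrite c_w, c_v. unfold beta. apply sum_le. intros y [Hy|Hy].
    + subst y; pose proof (beta_le_n t); lia.
    + rewrite Forall_forall in H. pose proof (H y Hy). pose proof (beta_le_n y); lia.
Qed.

Theorem proposition11 : forall T : term, c T <= beta T.
Proof. exact key. Qed.
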